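(* For the Proximal Bundle Method, suppose iteration $k$ is a descent step and iterations $k+1,\dots,k+T$ are all null steps, and let $G=\sup\{\|g_{t+1}\|: k\le t\le k+T\}>0$. For $k<t\le k+T+1$ define the model proximal gap $\widetilde\Delta_t:=f(x_{k+1})-\left(f_t(z_{t+1})+\frac{\rho_t}{2}\|z_{t+1}-x_{k+1}\|^2\right)$. Then for every $k<t\le k+T$, $$\widetilde\Delta_{t+1}\le\widetilde\Delta_t-\frac{(1-\beta)^2\rho_{k+1}\widetilde\Delta_t^2}{8G^2}.$$
   Context: Throughout, $f:\mathbb{R}^d\to\mathbb{R}$ is a proper closed convex function attaining its minimum $f^*=\inf f$ on the nonempty set $X^*=\{x: f(x)=f^*\}$; $\partial f(x)$ is the convex subdifferential. A subgradient oracle returns, for any $x$, the value $f(x)$ and some $g(x)\in\partial f(x)$. Proximal Bundle Method: fix $\beta\in(0,1)$, $x_0=z_0\in\mathbb{R}^d$, $g_0=g(x_0)$, and the initial model $f_0(x)=f(x_0)+\langle g_0,x-x_0\rangle$. At iteration $k\ge0$, given a convex model $f_k:\mathbb{R}^d\to\mathbb{R}$ and stepsize $\rho_k>0$, compute $z_{k+1}=\operatorname{argmin}_z f_k(z)+\frac{\rho_k}{2}\|z-x_k\|^2$. If $\beta(f(x_k)-f_k(z_{k+1}))\le f(x_k)-f(z_{k+1})$, iteration $k$ is a descent step and $x_{k+1}=z_{k+1}$; otherwise it is a null step and $x_{k+1}=x_k$. Then a new convex model $f_{k+1}$ and stepsize $\rho_{k+1}$ are chosen satisfying, with $g_{k+1}=g(z_{k+1})$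 and $s_{k+1}=\rho_k(x_k-z_{k+1})$: (1) $f_{k+1}(x)\le f(x)$ for all $x$; (2) $f_{k+1}(x)\ge f(z_{k+1})+\langle g_{k+1},x-z_{k+1}\rangle$ for all $x$; (3) if iteration $k$ was a null step, $f_{k+1}(x)\ge f_k(z_{k+1})+\langle s_{k+1},x-z_{k+1}\rangle$ for all $x$; (4) if iteration $k$ was a null step, $\rho_{k+1}\ge\rho_k$. *)

(* Defs.v *)
From HB Require Import structures.
From mathcomp Require Import all_boot all_order all_algebra.
From mathcomp Require Import reals.
Set Implicit Arguments. Unset Strict Implicit. Unset Printing Implicit Defensive.
Import Order.TTheory GRing.Theory Num.Theory.
Local Open Scope ring_scope.

Section PBM.
Variables (R : realType) (d : nat).
Notation V := 'rV[R]_d.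

Definition dotv (u v : V) : R := \sum_(i < d) u ord0 i * v ord0 i.
Definition normv (u : V) : R := Num.sqrt (dotv u u).

Definition convex_fun (h : V -> R) : Prop :=
  forall (x y : V) (t : R), 0 <= t -> t <= 1 ->
    h ((1 - t) *: x + t *: y) <= (1 - t) * h x + t * h y.

Definition is_subgrad (h : V -> R) (x s : V) : Prop :=
  forall y, h x + dotv s (y - x) <= h y.

Definition descent_step (f : V -> R) (beta : R) (x z : nat -> V)
  (model : nat -> V -> R) (k : nat) : Prop :=
  beta * (f (x k) - model k (z k.+1)) <= f (x k) - f (z k.+1).

(* (x,z,model,rho) is a run of the Proximal Bundle Method on f with
   parameter beta and subgradient oracle gor; g_k = gor (z_k), and
   g_0 = gor (x_0) since z_0 = x_0. *)
Definition is_PBM_run (f : V -> R) (gor : V -> V) (beta : R)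
  (x z : nat -> V) (model : nat -> V -> R) (rho : nat -> R) : Prop :=
  [/\ 0 < beta /\ beta < 1,
      x 0%N = z 0%N /\
      (forall y, model 0%N y = f (x 0%N) + dotv (gor (x 0%N)) (y - x 0%N)),
      (forall k, convex_fun (model k) /\ 0 < rho k),
      (forall k y, model k (z k.+1) + rho k / 2 * normv (z k.+1 - x k) ^+ 2
                   <= model k y + rho k / 2 * normv (y - x k) ^+ 2) /\
      (forall k, (descent_step f beta x z model k -> x k.+1 = z k.+1) /\
                 (~ descent_step f beta x z model k -> x k.+1 = x k)) &
      (forall k y,
        [/\ model k.+1 y <= f y,
            f (z k.+1) + dotv (gor (z k.+1)) (y - z k.+1) <= model k.+1 y,
            ~ descent_step f beta x z model k ->
              model k (z k.+1) + dotv (rho k *: (x k - z k.+1)) (y - z k.+1)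
                <= model k.+1 y &
            ~ descent_step f beta x z model k -> rho k <= rho k.+1])].

Definition model_gap (f : V -> R) (x z : nat -> V) (model : nat -> V -> R)
  (rho : nat -> R) (k t : nat) : R :=
  f (x k.+1) - (model t (z t.+1) + rho t / 2 * normv (z t.+1 - x k.+1) ^+ 2).

End PBM.

(* Main.v *)
Require Import Defs.
From HB Require Import structures.
From mathcomp Require Import all_boot all_order all_algebra.
From mathcomp Require Import reals.
From mathcomp Require Import ring lra zify.
Import Order.TTheory GRing.Theory Num.Theory.
Local Open Scope ring_scope.
Set Implicit Arguments. Unset Strict Implicit.

Section Dot.
Variables (R : realType) (d : nat).
Implicit Types (u v w : 'rV[R]_d) (a : R).

Lemma dotvC u v : dotv u v = dotv v u.
Proof. by apply: eq_bigr => i _; rewrite mulrC. Qed.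
Lemma dotvDl u v w : dotv (u + v) w = dotv u w + dotv v w.
Proof. by rewrite /dotv -big_split; apply: eq_bigr => i _; rewrite mxE mulrDl. Qed.
Lemma dotvDr u v w : dotv w (u + v) = dotv w u + dotv w v.
Proof. by rewrite dotvC dotvDl !(dotvC w). Qed.
Lemma dotvZl a u w : dotv (a *: u) w = a * dotv u w.
Proof. by rewrite /dotv mulr_sumr; apply: eq_bigr => i _; rewrite mxE mulrA. Qed.
Lemma dotvZr a u w : dotv w (a *: u) = a * dotv w u.
Proof. by rewrite dotvC dotvZl dotvC. Qed.
Lemma dotvNl u w : dotv (- u) w = - dotv u w.
Proof. by rewrite -scaleN1r dotvZl mulN1r. Qed.
Lemma dotvNr u w : dotv w (- u) = - dotv w u.
Proof. by rewrite dotvC dotvNl dotvC. Qed.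
Lemma dotv_ge0 u : 0 <= dotv u u.
Proof. by apply: sumr_ge0 => i _; rewrite -expr2 sqr_ge0. Qed.
Lemma normv2 u : normv u ^+ 2 = dotv u u.
Proof. by rewrite sqr_sqrtr // dotv_ge0. Qed.
Lemma normv_ge0 u : 0 <= normv u.
Proof. exact: sqrtr_ge0. Qed.

(* completing the square *)
Lemma sq_bound (v a : 'rV[R]_d) (r th : R) : 0 < r ->
  - (th ^+ 2 * dotv v v / (2 * r)) <= th * dotv v a + r / 2 * dotv a a.
Proof.
move=> r0.
have H := dotv_ge0 (r *: a + th *: v).
rewrite !(dotvDl, dotvDr, dotvZl, dotvZr) (dotvC a v) in H.
set p := dotv a a in H *; set q := dotv v a in H *; set w := dotv v v in H *.
have -> : - (th ^+ 2 * w / (2 * r)) = - (th ^+ 2 * w) / (2 * r) by rewrite mulNr.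
rewrite ler_pdivrMr ?mulr_gt0 //.
nra.
Qed.
End Dot.

Section SC.
Variables (R : realType) (d : nat).

Lemma lim_lemma (a b : R) : 0 <= b -> (forall l, 0 < l -> l <= 1 -> (1 - l) * b <= a) -> b <= a.
Proof.
move=> b0 H; rewrite leNgt; apply/negP => ab.
have := H 1 ltr01 (lexx _); rewrite subrr mul0r => a0.
have bpos : 0 < b by lra.
have := H ((b - a) / (2 * b)).
have -> : (1 - (b - a) / (2 * b)) * b = (a + b) / 2.
  by field; rewrite gt_eqF.
have h1 : 0 < (b - a) / (2 * b) by apply: divr_gt0; lra.
have h2 : (b - a) / (2 * b) <= 1.
  rewrite ler_pdivrMr; lra.
move=> /(_ h1 h2); lra.
Qed.

Lemma strong_cvx (m : 'rV[R]_d -> R) (r : R) (xb zz : 'rV[R]_d) :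
  convex_fun m -> 0 < r ->
  (forall y, m zz + r / 2 * normv (zz - xb) ^+ 2 <= m y + r / 2 * normv (y - xb) ^+ 2) ->
  forall y, m zz + r / 2 * dotv (zz - xb) (zz - xb) + r / 2 * dotv (y - zz) (y - zz)
            <= m y + r / 2 * dotv (y - xb) (y - xb).
Proof.
move=> cvx r0 Hmin y.
set a := zz - xb; set b := y - xb.
have Ez : y - zz = b - a by apply/rowP => i; rewrite !mxE; ring.
rewrite Ez.
have Eyl : forall l, (1 - l) *: zz + l *: y - xb = (1 - l) *: a + l *: b
  by move=> l; apply/rowP => i; rewrite !mxE; ring.
rewrite -/a in Hmin; clearbody a b.
suff H : forall l, 0 < l -> l <= 1 -> (1 - l) * (r / 2 * dotv (b - a) (b - a))
      <= m y + r / 2 * dotv b b - (m zz + r / 2 * dotv a a).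
  have hb : 0 <= r / 2 * dotv (b - a) (b - a) by apply: mulr_ge0; [lra | exact: dotv_ge0].
  have := @lim_lemma _ _ hb H; lra.
move=> l l0 l1.
have := Hmin ((1 - l) *: zz + l *: y).
rewrite Eyl.
have := cvx zz y l (ltW l0) l1.
rewrite !normv2 !(dotvDl, dotvDr, dotvZl, dotvZr, dotvNl, dotvNr) (dotvC b a).
set A := dotv a a; set B := dotv b b; set D := dotv a b.
set mz := m zz; set my := m y; set ml := m _.
move=> c1 c2.
have key : l * ((1 - l) * (r / 2 * (B - D - (D - A)))) <= l * (my + r / 2 * B - (mz + r / 2 * A)).
  nra.
by rewrite ler_pM2l in key.
Qed.
End SC.

Lemma scalar_final (R : realType) (D dl bt r1 rt G C gain : R) :
  0 < bt -> bt < 1 -> 0 < r1 -> r1 <= rt -> 0 < G -> 0 <= D ->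
  (1 - bt) * D <= dl -> D <= G ^+ 2 / (2 * r1) -> C <= 2 * G ^+ 2 + 4 * rt * D ->
  (forall th, 0 <= th -> th <= 1 -> th * dl - th ^+ 2 * C / (2 * rt) <= gain) ->
  (1 - bt) ^+ 2 * r1 * D ^+ 2 / (8 * G ^+ 2) <= gain.
Proof.
move=> b0 b1 r10 r1t G0 D0 hdl hD hC Hg.
have rt0 : 0 < rt by lra.
have G20 : 0 < G ^+ 2 by rewrite exprn_gt0.
set K := 4 * rt * G ^+ 2 / r1.
have K0 : 0 < K by rewrite /K divr_gt0 // !mulr_gt0.
have hD' : 2 * r1 * D <= G ^+ 2 by rewrite -ler_pdivlMl ?mulr_gt0 // mulrC.
have hCK : C <= K.
  rewrite /K ler_pdivlMr //.
  have : C * r1 <= (2 * G ^+ 2 + 4 * rt * D) * r1 by rewrite ler_pM2r.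
  nra.
set e := (1 - bt) * D.
have e0 : 0 <= e by rewrite /e mulr_ge0 //; lra.
have edl : e <= dl by [].
have Q : (1 - bt) ^+ 2 * r1 * D ^+ 2 / (8 * G ^+ 2) = rt * e ^+ 2 / (2 * K).
  rewrite /e /K; field; by rewrite (gt_eqF r10) (gt_eqF G0) (gt_eqF rt0).
have [small|big] := lerP (rt * e) K.
- set th := rt * e / K.
  have th0 : 0 <= th by apply: divr_ge0; [apply: mulr_ge0|]; lra.
  have th1 : th <= 1 by rewrite /th ler_pdivrMr // mul1r.
  rewrite Q; apply: le_trans (Hg th th0 th1).
  have h1 : th * e <= th * dl by rewrite ler_wpM2l.
  have h2 : th ^+ 2 * C / (2 * rt) <= th ^+ 2 * K / (2 * rt).
    apply: ler_wpM2r; [rewrite invr_ge0; lra|].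
    by apply: ler_wpM2l; [exact: sqr_ge0|].
  have -> : rt * e ^+ 2 / (2 * K) = th * e - th ^+ 2 * K / (2 * rt).
    rewrite /th; field; by rewrite (gt_eqF K0) (gt_eqF rt0).
  lra.
- apply: le_trans (Hg 1 ler01 (lexx _)).
  have h2 : 1 ^+ 2 * C / (2 * rt) <= e / 2.
    rewrite expr1n mul1r ler_pdivrMr ?mulr_gt0 //; last lra.
  have h3 : (1 - bt) ^+ 2 * r1 * D ^+ 2 / (8 * G ^+ 2) <= e / 2.
    rewrite ler_pdivrMr; last by rewrite mulr_gt0.
    have hh : 0 <= (1 - bt) * D by [].
    have : (1 - bt) * D * ((1 - bt) * r1 * D) <= (1 - bt) * D * (G ^+ 2 / 2).
      apply: ler_wpM2l => //. nra.
    rewrite /e; nra.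
  lra.
Qed.

Lemma gain_lemma (R : realType) (d : nat) (m0 m1 f : 'rV[R]_d -> R) (g xb zz w : 'rV[R]_d)
  (r r1 th : R) : 0 < r -> r <= r1 -> 0 <= th -> th <= 1 ->
  f zz + dotv g (w - zz) <= m1 w ->
  m0 zz + dotv (r *: (xb - zz)) (w - zz) <= m1 w ->
  m0 zz + r / 2 * dotv (zz - xb) (zz - xb) + th * (f zz - m0 zz)
   + (th * dotv (g - r *: (xb - zz)) (w - zz) + r / 2 * dotv (w - zz) (w - zz))
   <= m1 w + r1 / 2 * dotv (w - xb) (w - xb).
Proof.
move=> r0 rr1 th0 th1 h1 h2.
have E1 : w - xb = (w - zz) + (zz - xb) by apply/rowP => i; rewrite !mxE; ring.
have E2 : xb - zz = - (zz - xb) by apply/rowP => i; rewrite !mxE; ring.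
rewrite E1 E2 in h2 *.
move: h1 h2; move: (w - zz) (zz - xb) => a b h1 h2.
have nn : 0 <= dotv (a + b) (a + b) by apply: dotv_ge0.
move: nn; rewrite !(dotvDl, dotvDr, dotvZl, dotvZr, dotvNl, dotvNr, opprK) in h2 * => nn.
rewrite (dotvC b a).
set A := dotv a a in nn *; set B := dotv b b in nn *; set D := dotv a b in nn *.
set q := dotv g a in h1 *.
rewrite (dotvC b a) -/D in h2.
rewrite (dotvC b a) -/D in nn.
have hr : r / 2 * (A + D + (D + B)) <= r1 / 2 * (A + D + (D + B)).
  by apply: ler_wpM2r => //; lra.
have : th * (f zz + q) + (1 - th) * (m0 zz + r * - D) <= m1 w.
  have : (1 - th) * (m0 zz + r * - D) <= (1 - th) * m1 w by apply: ler_wpM2l; lra.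
  have : th * (f zz + q) <= th * m1 w by apply: ler_wpM2l.
  lra.
lra.
Qed.

Lemma dotv_subC (R : realType) (d : nat) (u v : 'rV[R]_d) :
  dotv (u - v) (u - v) = dotv (v - u) (v - u).
Proof. by rewrite -opprB dotvNl dotvNr opprK. Qed.

Lemma dotv_sub_bound (R : realType) (d : nat) (u w : 'rV[R]_d) :
  dotv (u - w) (u - w) <= 2 * dotv u u + 2 * dotv w w.
Proof.
have := dotv_ge0 (u + w).
rewrite !(dotvDl, dotvDr, dotvNl, dotvNr) (dotvC w u); lra.
Qed.

Lemma sq_le (R : realType) (d : nat) (u : 'rV[R]_d) (G : R) :
  normv u <= G -> dotv u u <= G ^+ 2.
Proof. move=> h; rewrite -normv2; have := normv_ge0 u; nra. Qed.

Unset Implicit Arguments. Set Strict Implicit.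

Theorem mainTheorem10 (R : realType) (d : nat) (f : 'rV[R]_d -> R)
  (gor : 'rV[R]_d -> 'rV[R]_d) (beta : R)
  (x z : nat -> 'rV[R]_d) (model : nat -> 'rV[R]_d -> R) (rho : nat -> R)
  (k T : nat) :
  convex_fun f ->
  (exists xs : 'rV[R]_d, forall y, f xs <= f y) ->
  (forall y, is_subgrad f y (gor y)) ->
  is_PBM_run f gor beta x z model rho ->
  descent_step f beta x z model k ->
  (forall t, (k < t <= k + T)%N -> ~ descent_step f beta x z model t) ->
  let G := \big[Num.max/0]_(j < T.+1) normv (gor (z (k + j).+1)) in
  0 < G ->
  forall t, (k < t <= k + T)%N ->
    model_gap f x z model rho k t.+1 <=
      model_gap f x z model rho k t
      - (1 - beta) ^+ 2 * rho k.+1 * (model_gap f x z model rho k t) ^+ 2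
        / (8 * G ^+ 2).
Proof.
move=> _ _ _ [[b0 b1] _ Hcr [Hmin Hstep] Hmod] Hdesc Hnull G Gpos t /andP[kt tkT].
set xb := x k.+1.
have xbz : xb = z k.+1 by exact: (Hstep k).1.
have Hx : forall s, (k < s)%N -> (s <= k + T + 1)%N -> x s = xb.
  elim=> [|s IH] // h1 h2.
  have [->|ne] := eqVneq s k; first by [].
  rewrite ((Hstep s).2 (Hnull s _)); [apply: IH; lia | apply/andP; lia].
have Hr : forall s, (k < s)%N -> (s <= k + T + 1)%N -> rho k.+1 <= rho s.
  elim=> [|s IH] // h1 h2.
  have [->|ne] := eqVneq s k; first by [].
  apply: le_trans (IH _ _) _; try lia.
  have [_ _ _ h4] := Hmod s 0; apply: h4; apply: Hnull; apply/andP; lia.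
pose P s := model s (z s.+1) + rho s / 2 * dotv (z s.+1 - xb) (z s.+1 - xb).
have SC : forall s, (k < s)%N -> (s <= k + T)%N -> forall y,
    P s + rho s / 2 * dotv (y - z s.+1) (y - z s.+1)
    <= model s y + rho s / 2 * dotv (y - xb) (y - xb).
  move=> s h1 h2 y; rewrite /P.
  apply: (strong_cvx (Hcr s).1 (Hcr s).2).
  have xs : x s = xb by apply: Hx; lia.
  by move=> y'; rewrite -xs; apply: Hmin.
have mono : forall s, (k < s)%N -> (s <= k + T)%N -> P s <= P s.+1.
  move=> s h1 h2.
  have ns : ~ descent_step f beta x z model s by apply: Hnull; apply/andP; lia.
  have [_ m2 m3 m4] := Hmod s (z s.+2).
  have xs : x s = xb by apply: Hx; lia.
  have m3' := m3 ns; rewrite xs in m3'.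
  have := gain_lemma (th := 0) (Hcr s).2 (m4 ns) (lexx _) ler01 m2 m3'.
  rewrite !mul0r add0r addr0.
  have := dotv_ge0 (z s.+2 - z s.+1).
  have := (Hcr s).2.
  rewrite /P.
  move=> r0 nn; nra.
have Pk : f xb - dotv (gor xb) (gor xb) / (2 * rho k.+1) <= P k.+1.
  have [_ m2 _ _] := Hmod k (z k.+2).
  rewrite -xbz in m2.
  have := sq_bound (gor xb) (z k.+2 - xb) 1 (Hcr k.+1).2.
  rewrite /P; move: m2; rewrite expr1n !mul1r.
  have := dotv_ge0 (z k.+2 - xb).
  lra.
have Pmon : forall s, (k < s)%N -> (s <= k + T)%N -> P k.+1 <= P s.
  elim=> [|s IH] // h1 h2.
  have [->|ne] := eqVneq s k; first by [].
  apply: le_trans (IH _ _) (mono _ _ _); lia.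
have hG : forall j, (j <= T)%N -> dotv (gor (z (k + j).+1)) (gor (z (k + j).+1)) <= G ^+ 2.
  move=> j hj; apply: sq_le.
  have hj' : (j < T.+1)%N by lia.
  exact: (le_bigmax 0 (fun j : 'I_T.+1 => normv (gor (z (k + j).+1))) (Ordinal hj')).
have hG1 : dotv (gor xb) (gor xb) <= G ^+ 2 by rewrite xbz; have := hG 0%N (leq0n _); rewrite addn0.
have hGt : dotv (gor (z t.+1)) (gor (z t.+1)) <= G ^+ 2.
  have := hG (t - k)%N; rewrite subnKC; [apply; lia | lia].
have eq1 : model_gap f x z model rho k t = f xb - P t by rewrite /model_gap normv2.
have eq2 : model_gap f x z model rho k t.+1 = f xb - P t.+1 by rewrite /model_gap normv2.
rewrite eq1 eq2.
have xt : x t = xb by apply: Hx; lia.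
have rt0 := (Hcr t).2.
have hn : f xb - f (z t.+1) < beta * (f xb - model t (z t.+1)).
  rewrite ltNge; apply/negP; rewrite -xt; apply: Hnull; apply/andP; lia.
have mtf : model t xb <= f xb.
  have [m1 _ _ _] := Hmod t.-1 xb.
  by rewrite prednK in m1 => //; lia.
set n := dotv (z t.+1 - xb) (z t.+1 - xb).
have hnD : rho t / 2 * n <= f xb - P t.
  have := SC t kt tkT xb.
  rewrite subrr dotv_subC -/n /P.
  have -> : dotv (0 : 'rV[R]_d) 0 = 0 by rewrite /dotv big1 // => i _; rewrite mxE mul0r.
  rewrite -/n; lra.
have n0 : 0 <= n by apply: dotv_ge0.
have rk0 : 0 < rho k.+1 by exact: (Hcr k.+1).2.
suff HQ : (1 - beta) ^+ 2 * rho k.+1 * (f xb - P t) ^+ 2 / (8 * G ^+ 2) <= P t.+1 - P t by lra.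
apply: (@scalar_final _ (f xb - P t) (f (z t.+1) - model t (z t.+1)) beta (rho k.+1) (rho t) G
   (dotv (gor (z t.+1) - rho t *: (xb - z t.+1)) (gor (z t.+1) - rho t *: (xb - z t.+1)))
   (P t.+1 - P t)) => //.
- by apply: Hr => //; rewrite addn1 leqW.
- have : 0 <= rho t / 2 * n by apply: mulr_ge0 => //; lra.
  lra.
- have h0 : 0 <= (1 - beta) * (rho t / 2 * n).
    by apply: mulr_ge0; [lra | apply: mulr_ge0 => //; lra].
  have e : (1 - beta) * (f xb - P t) + (1 - beta) * (rho t / 2 * n)
      = (f xb - model t (z t.+1)) - beta * (f xb - model t (z t.+1)) by rewrite /P -/n; ring.
  lra.
- have := Pmon t kt tkT.
  have : dotv (gor xb) (gor xb) / (2 * rho k.+1) <= G ^+ 2 / (2 * rho k.+1).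
    apply: ler_wpM2r => //; rewrite invr_ge0; lra.
  lra.
- apply: le_trans (dotv_sub_bound _ _) _.
  rewrite dotvZl dotvZr dotv_subC -/n.
  have : rho t * (rho t * n) <= rho t * (2 * (f xb - P t)).
    apply: ler_wpM2l; lra.
  lra.
- move=> th th0 th1.
  have ns : ~ descent_step f beta x z model t by apply: Hnull; rewrite kt tkT.
  have [_ m2 m3 m4] := Hmod t (z t.+2).
  have m3' := m3 ns; rewrite xt in m3'.
  have := gain_lemma (th := th) rt0 (m4 ns) th0 th1 m2 m3'.
  have := sq_bound (gor (z t.+1) - rho t *: (xb - z t.+1)) (z t.+2 - z t.+1) th rt0.
  rewrite /P -/n.
  Show. lra.
Qed.
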